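(* Let $s\ge 1$, $q=4^{2s}$, and let $\theta$ be the automorphism of $F_q$ given by $\theta(a)=a^{4^s}$. Let $h(x)\in F_q[x;\theta]$ be a palindromic polynomial of degree $t$. (1) If $t$ is odd, then its skew reciprocal polynomial $h^R(x)$ is a $\theta$-palindromic polynomial. (2) If $t$ is even, then $h^R(x)$ is also a palindromic polynomial.
   Context: $F_q[x;\theta]$ is the skew polynomial ring: polynomials $\sum a_ix^i$ with $a_i\in F_q$, usual addition, and multiplication determined by $xa=\theta(a)x$ for $a\in F_q$. For $f(x)=\sum_{i=0}^t a_ix^i$ of degree $t$, the skew reciprocal polynomial is $f^R(x)=\sum_{i=0}^t x^ia_{t-i}=\sum_{i=0}^t\theta^i(a_{t-i})x^i$. A polynomial $f(x)=a_0+\dots+a_tx^t$ of degree $t$ is palindromic if $a_i=a_{t-i}$ for all $i$, and $\theta$-palindromic if $a_i=\theta(a_{t-i})$ for all $i$. *)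

(* Defs.v *)
From mathcomp Require Import all_boot all_order all_algebra.
Set Implicit Arguments. Unset Strict Implicit. Unset Printing Implicit Defensive.
Import GRing.Theory.
Local Open Scope ring_scope.

(* Elements of the skew polynomial ring F[x;theta] are represented by their
   coefficient sequences, stored as {poly F}: f = \sum_i f`_i x^i (coefficients
   on the left).  Only the additive structure / coefficients are used here;
   the skew multiplication is not needed for the statement. *)

Definition theta_s (F : finFieldType) (s : nat) (a : F) : F := a ^+ (4 ^ s).

Definition skew_reciprocal (F : fieldType) (theta : F -> F) (f : {poly F})
  : {poly F} :=
  let t := (size f).-1 in \poly_(i < t.+1) iter i theta f`_(t - i).

Definition palindromic (F : fieldType) (f : {poly F}) : Prop :=
  f != 0 /\ forall i, (i <= (size f).-1)%N -> f`_i = f`_((size f).-1 - i).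

Definition theta_palindromic (F : fieldType) (theta : F -> F) (f : {poly F})
  : Prop :=
  f != 0 /\
  forall i, (i <= (size f).-1)%N -> f`_i = theta f`_((size f).-1 - i).

(* Main.v *)
Require Import Defs.
From mathcomp Require Import all_boot all_order all_algebra.
Local Open Scope ring_scope.
From mathcomp Require Import finfield.
Import GRing.Theory.

Theorem theorem5 (s : nat) (F : finFieldType) (hs : (1 <= s)%N)
  (hq : #|F| = (4 ^ (2 * s))%N) (h : {poly F}) (t : nat)
  (ht : size h = t.+1) (hpal : palindromic h) :
  (odd t -> theta_palindromic (theta_s s) (skew_reciprocal (theta_s s) h)) /\
  (~~ odd t -> palindromic (skew_reciprocal (theta_s s) h)).
Proof.
set th := theta_s s.
have thth : forall a, th (th a) = a.
  move=> a; rewrite /th /theta_s -exprM -expnD addnn -muln2 mulnC -hq.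
  exact: expf_card.
have th0 : th 0 = 0 by rewrite /th /theta_s expr0n expn_eq0.
have iterE : forall i a, iter i th a = if odd i then th a else a.
  elim=> [|i IH] a //=; rewrite IH; case: (odd i) => //=.
have [hnz hp] := hpal.
rewrite ht /= in hp.
have coefR : forall i, (skew_reciprocal th h)`_i =
    if (i <= t)%N then (if odd i then th h`_i else h`_i) else 0.
  move=> i; rewrite /skew_reciprocal ht /= coef_poly ltnS.
  case: leqP => hi //; rewrite iterE -hp ?leq_subr // subKn //.
have hlead : h`_t != 0.
  by have := lead_coef_eq0 h; rewrite lead_coefE ht /= => ->.
have sizeR : size (skew_reciprocal th h) = t.+1.
  rewrite /skew_reciprocal ht /=; apply: size_poly_eq; rewrite /= iterE subnn.
  rewrite hp // subnn in hlead.
  case: (odd t) => //; apply/negP => /eqP E; move: hlead.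
  by rewrite -(thth h`_0) E th0 eqxx.
have Rnz : skew_reciprocal th h != 0 by rewrite -size_poly_eq0 sizeR.
rewrite /theta_palindromic /palindromic sizeR /=; split=> ot; split=> // i hi.
  rewrite !coefR hi leq_subr oddB // ot.
  rewrite -hp ?leq_subr //; case: (odd i) => /=; by rewrite ?thth.
rewrite !coefR hi leq_subr oddB // (negbTE ot) /= -hp ?leq_subr //; by case: (odd i).
Qed.
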